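(* Let $H_{\mathrm{gen}}$ be a generalized Hubbard Hamiltonian on a finite simple graph $G=(V,E)$ and let $\eta^\dagger=\sum_{\boldsymbol r}q_{\boldsymbol r}c^\dagger_{\boldsymbol r,\uparrow}c^\dagger_{\boldsymbol r,\downarrow}$ satisfy $[H_{\mathrm{gen}},\eta^\dagger]=\mathcal{E}\eta^\dagger$ for some $\mathcal{E}\in\mathbb{R}$. Let $M\ge1$, let $\mathcal{S}$ be a collection of $(M+1)$-element subsets of $V$, and for each $S\in\mathcal{S}$ and each spin assignment $\sigma:S\to\{\uparrow,\downarrow\}$ let $V^{\sigma}_S\in\mathbb{R}$. Define $$\hat I_{M+1}=\sum_{S\in\mathcal{S}}\ \sum_{\sigma:S\to\{\uparrow,\downarrow\}}V^{\sigma}_S\prod_{\boldsymbol r\in S}\hat n_{\boldsymbol r,\sigma(\boldsymbol r)},$$ and assume $\sum_{\sigma:S\to\{\uparrow,\downarrow\}}V^{\sigma}_S=0$ for every $S\in\mathcal{S}$. Let $H=H_{\mathrm{gen}}+\hat I_{M+1}$, $H_0=H$, $H_{n+1}=[H_n,\eta^\dagger]$, and let $\ket{\Omega}$ be the fermionic vacuum. Then $H\ket\Omega=0$, $H_1\ket\Omega=\mathcal{E}\eta^\dagger\ket\Omega$, $H_n\ket\Omega=0$ for $2\le n\le M$, $H_{M+1}=0$, and for every integer $n\ge0$, $$H\,(\eta^\dagger)^n\ket\Omega=n\mathcal{E}\,(\eta^\dagger)^n\ket\Omega.$$ (For $M=1$ this covers two-body density interactions $\hat I_2=\sum_{\sigma,\sigma'}\sum_{\{\boldsymbol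 r,\boldsymbol r'\}}V^{\sigma,\sigma'}_{\boldsymbol r,\boldsymbol r'}\hat n_{\boldsymbol r,\sigma}\hat n_{\boldsymbol r',\sigma'}$ over pairs of distinct sites with $\sum_{\sigma,\sigma'}V^{\sigma,\sigma'}_{\boldsymbol r,\boldsymbol r'}=0$ for each pair, e.g. nearest-neighbour $S^z S^z$ interactions.)
   Context: Generalized Hubbard Hamiltonian on a finite simple graph $G=(V,E)$ (each edge with a fixed orientation): $H_{\mathrm{gen}}=-\sum_{\sigma,\sigma'}\sum_{\{\boldsymbol r,\boldsymbol r'\}\in E}(t^{\sigma,\sigma'}_{\boldsymbol r,\boldsymbol r'}c^\dagger_{\boldsymbol r,\sigma}c_{\boldsymbol r',\sigma'}+t^{\sigma',\sigma}_{\boldsymbol r',\boldsymbol r}c^\dagger_{\boldsymbol r',\sigma'}c_{\boldsymbol r,\sigma})-\sum_{\boldsymbol r,\sigma}\mu_{\boldsymbol r,\sigma}\hat n_{\boldsymbol r,\sigma}+\sum_{\boldsymbol r}U_{\boldsymbol r}\hat n_{\boldsymbol r,\uparrow}\hat n_{\boldsymbol r,\downarrow}$ with $t^{\sigma,\sigma'}_{\boldsymbol r,\boldsymbol r'}=\overline{t^{\sigma',\sigma}_{\boldsymbol r',\boldsymbol r}}$ and real $\mu_{\boldsymbol r,\sigma},U_{\boldsymbol r}$; $c,c^\dagger$ are spin-1/2 fermion operators with canonical anticommutation relations, $\hat n_{\boldsymbol r,\sigma}=c^\dagger_{\boldsymbol r,\sigma}c_{\boldsymbol r,\sigma}$; $q_{\boldsymbol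 r}\in\mathbb{C}$. The vacuum $\ket\Omega$ is the state annihilated by all $c_{\boldsymbol r,\sigma}$. *)

(* Defs.v *)
From HB Require Import structures.
From mathcomp Require Import all_boot all_order all_algebra.
Set Implicit Arguments. Unset Strict Implicit. Unset Printing Implicit Defensive.
Import Order.TTheory GRing.Theory Num.Theory.
Local Open Scope ring_scope.

(* Fermionic Fock space on a finite site set V with spin 1/2.
   Modes are pairs (site, spin); spin true = up, false = down.
   Fock basis vectors |A> are indexed by occupation sets A : {set mode V};
   operators are square matrices over the Fock basis (indexed via enum_rank). *)

Definition up := true.
Definition down := false.

Section Fock.
Variables (V : finType) (C : numClosedFieldType).

Definition mode := (V * bool)%type.
Definition dimF := #|{set mode}|.
Definition op := 'M[C]_dimF.
Definition ket := 'cV[C]_dimF.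

(* Jordan-Wigner sign: (-1)^(number of occupied modes of A preceding x). *)
Definition jwsign (x : mode) (A : {set mode}) : C :=
  (-1) ^+ #|[set y in A | (enum_rank y < enum_rank x)%N]|.

(* annihilation operator c_x : c_x |B> = jwsign x (B\x) |B \ x> if x in B, else 0 *)
Definition ann (x : mode) : op :=
  \matrix_(i < dimF, j < dimF)
    (let A : {set mode} := enum_val i in let B : {set mode} := enum_val j in
     if (x \in B) && (A == B :\ x) then jwsign x A else 0).

Definition cre (x : mode) : op := map_mx Num.conj ((ann x)^T).

Definition num (x : mode) : op := cre x * ann x.

Definition vac : ket := \col_(i < dimF) (if (enum_val i : {set mode}) == set0 then 1 else 0).

Definition comm (A B : op) : op := A * B - B * A.

(* generalized Hubbard Hamiltonian; E = oriented edges,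
   t r r' s s' = t^{s,s'}_{r,r'} *)
Definition Hgen (E : {set V * V}) (t : V -> V -> bool -> bool -> C)
  (mu : V -> bool -> C) (U : V -> C) : op :=
  - (\sum_(s : bool) \sum_(s' : bool) \sum_(e in E)
       (t e.1 e.2 s s' *: (cre (e.1, s) * ann (e.2, s'))
        + t e.2 e.1 s' s *: (cre (e.2, s') * ann (e.1, s))))
  - (\sum_(r : V) \sum_(s : bool) mu r s *: num (r, s))
  + \sum_(r : V) U r *: (num (r, up) * num (r, down)).

Definition etad (q : V -> C) : op :=
  \sum_(r : V) q r *: (cre (r, up) * cre (r, down)).

Definition Iint (Scol : {set {set V}})
  (Vint : forall S : {set V}, {ffun {r : V | r \in S} -> bool} -> C) : op :=
  \sum_(S in Scol) \sum_(sg : {ffun {r : V | r \in S} -> bool})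
     Vint S sg *: \prod_(r : {r : V | r \in S}) num (val r, sg r).

Definition Hseq (H eta : op) (n : nat) : op := iter n (fun X => comm X eta) H.

End Fock.

(* Main.v *)
Require Import Defs.
From HB Require Import structures.
From mathcomp Require Import all_boot all_order all_algebra.
From mathcomp Require Import ring.
Import Order.TTheory GRing.Theory Num.Theory.
Local Open Scope ring_scope.

Lemma size_ie (T : finType) : size (index_enum T) = #|T|.
Proof. by rewrite cardT enumT. Qed.

Section Fock.
Variables (V : finType) (C : numClosedFieldType).
Local Notation mode := (mode V).
Local Notation op := (op V C).
Local Notation ket := (ket V C).

Definition ebas (A : {set mode}) : ket :=
  \col_(i < dimF V) ((enum_val i == A)%:R : C).

Lemma mulmx_ebas (X : op) A : X *m ebas A = \col_i X i (enum_rank A).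
Proof.
apply/matrixP => i j; rewrite !mxE (bigD1 (enum_rank A)) //= mxE enum_rankK eqxx mulr1.
rewrite big1 ?addr0 // => k nk; rewrite mxE; case: eqP => [ek|]; last by rewrite mulr0.
by move: nk; rewrite -ek enum_valK eqxx.
Qed.

Lemma op_ext (X Y : op) : (forall A, X *m ebas A = Y *m ebas A) -> X = Y.
Proof.
move=> h; apply/matrixP => i j; move: (h (enum_val j)) => /matrixP/(_ i ord0).
by rewrite !mulmx_ebas !mxE enum_valK.
Qed.

Lemma vac_ebas : vac V C = ebas set0.
Proof. by apply/matrixP => i j; rewrite !mxE; case: (_ == _). Qed.

Lemma mulE (X Y : op) (v : ket) : (X * Y) *m v = X *m (Y *m v).
Proof. by rewrite mulmxA mulmxE. Qed.

Lemma scaleAl (a : C) (X Y : op) : a *: (X * Y) = (a *: X) * Y.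
Proof. exact: scalemxAl. Qed.
Lemma scaleAr (a : C) (X Y : op) : a *: (X * Y) = X * (a *: Y).
Proof. exact: scalemxAr. Qed.

Lemma jw_sq (x : mode) (A : {set mode}) : jwsign C x A * jwsign C x A = 1.
Proof. by rewrite /jwsign -exprD addnn -mul2n exprM expr2 mulrNN mulr1 expr1n. Qed.

Lemma jw_conj (x : mode) (A : {set mode}) : Num.conj (jwsign C x A) = jwsign C x A.
Proof. by rewrite /jwsign rmorphXn rmorphN1. Qed.

Lemma ann_ebas (x : mode) B : ann C x *m ebas B =
  if x \in B then jwsign C x (B :\ x) *: ebas (B :\ x) else 0.
Proof.
rewrite mulmx_ebas; apply/matrixP => i j; rewrite !mxE /= enum_rankK.
case: (x \in B) => /=; last by rewrite mxE.
by rewrite !mxE; case: eqP => [->|_]; rewrite ?mulr1 ?mulr0.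
Qed.

Lemma setD1_eq (x : mode) (A B : {set mode}) :
  (x \in A) && (B == A :\ x) = (x \notin B) && (A == x |: B).
Proof.
apply/idP/idP.
  by case/andP => xA /eqP ->; rewrite setD11 /= setD1K ?eqxx.
by case/andP => xnB /eqP ->; rewrite setU11 setU1K ?eqxx.
Qed.

Lemma cre_ebas (x : mode) B : cre C x *m ebas B =
  if x \notin B then jwsign C x B *: ebas (x |: B) else 0.
Proof.
rewrite mulmx_ebas; apply/matrixP => i j; rewrite !mxE /= enum_rankK setD1_eq.
case: (x \in B) => /=; first by rewrite mxE conjC0.
rewrite !mxE; case: eqP => _; by rewrite ?mulr1 ?mulr0 ?jw_conj ?conjC0.
Qed.

Lemma num_ebas (x : mode) B : num C x *m ebas B = (x \in B)%:R *: ebas B.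
Proof.
rewrite /num mulE ann_ebas; case xB: (x \in B); last by rewrite mulmx0 scale0r.
by rewrite -scalemxAr cre_ebas setD11 /= scalerA jw_sq scale1r setD1K // scale1r.
Qed.

Lemma ann_vac (x : mode) : ann C x *m vac V C = 0.
Proof. by rewrite vac_ebas ann_ebas in_set0. Qed.

Lemma num_vac (x : mode) : num C x *m vac V C = 0.
Proof. by rewrite /num mulE ann_vac mulmx0. Qed.

Lemma num_cre (x y : mode) :
  num C x * cre C y = cre C y * num C x + (x == y)%:R *: cre C y.
Proof.
apply: op_ext => B; rewrite mulmxDl -scalemxAl (mulE (num C x)) (mulE _ (num C x)) num_ebas -scalemxAr cre_ebas.
case yB: (y \in B) => /=; first by rewrite mulmx0 !scaler0 addr0.
rewrite -scalemxAr num_ebas !scalerA in_setU1 -scalerDl; congr (_ *: _).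
by case: (x =P y) => [->|_]; rewrite ?yB /=; ring.
Qed.

Lemma jw_add (x y : mode) (A : {set mode}) : y != x -> y \notin A -> jwsign C x (y |: A) =
  (if (enum_rank y < enum_rank x)%N then -1 else 1) * jwsign C x A.
Proof.
move=> nyx yA; rewrite /jwsign; case: ifP => lt.
  have -> : [set z in y |: A | (enum_rank z < enum_rank x)%N] =
     y |: [set z in A | (enum_rank z < enum_rank x)%N].
    by apply/setP => z; rewrite !inE; case: (z =P y) => [->|] //=; rewrite lt.
  by rewrite cardsU1 inE (negbTE yA) /= exprS.
have -> : [set z in y |: A | (enum_rank z < enum_rank x)%N] =
     [set z in A | (enum_rank z < enum_rank x)%N].
  by apply/setP => z; rewrite !inE; case: (z =P y) => [->|] //=; rewrite lt (negbTE yA).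
by rewrite mul1r.
Qed.

Lemma cre_anti (x y : mode) : x != y -> cre C x * cre C y = - (cre C y * cre C x).
Proof.
move=> nxy; apply: op_ext => B; rewrite mulNmx !mulE !cre_ebas.
case xB: (x \in B); case yB: (y \in B) => /=; rewrite ?mulmx0 ?oppr0 //.
- by rewrite -scalemxAr cre_ebas in_setU1 xB orbT /= scaler0.
- by rewrite -scalemxAr cre_ebas in_setU1 yB orbT /= scaler0 oppr0.
rewrite -!scalemxAr !cre_ebas !in_setU1 xB yB (eq_sym y) (negbTE nxy) /=.
rewrite !scalerA setUCA -scaleNr; congr (_ *: _).
rewrite !jw_add ?xB ?yB // 1?eq_sym //.
case: (ltngtP (enum_rank x) (enum_rank y)) => h.
- by ring.
- by ring.
by move: nxy; rewrite (enum_rank_inj (val_inj h)) eqxx.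
Qed.

Definition Pr (r : V) : op := cre C (r, up) * cre C (r, down).

Lemma comm4 (a b c d : op) : a*c = -(c*a) -> a*d = -(d*a) -> b*c = -(c*b) ->
  b*d = -(d*b) -> (a*b)*(c*d) = (c*d)*(a*b).
Proof.
move=> ac ad bc bd.
rewrite !mulrA -(mulrA a b c) bc mulrN mulNr.
rewrite mulrA -(mulrA (a*c) b d) bd mulrN opprK mulrA.
by rewrite ac mulNr mulNr -(mulrA c a d) ad mulrN mulNr opprK mulrA.
Qed.

Lemma P_comm r s : Pr r * Pr s = Pr s * Pr r.
Proof.
case: (r =P s) => [->//|nrs]; apply: comm4; apply: cre_anti;
  by apply/eqP => -[] /eqP; rewrite ?(introF eqP nrs) //.
Qed.

Lemma num_P (x : mode) r : num C x * Pr r - Pr r * num C x = (x.1 == r)%:R *: Pr r.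
Proof.
rewrite /Pr mulrA num_cre mulrDl -mulrA num_cre mulrDr !mulrA.
rewrite addrAC [X in X + _ = _]addrAC subrr add0r -scaleAr -scaleAl -scalerDl.
congr (_ *: _); case: x => r' s /=.
case: (r' =P r) => [->|nr]; first by case: s; rewrite !xpair_eqE eqxx /= ?addr0 ?add0r.
by rewrite !xpair_eqE (introF eqP nr) /= addr0.
Qed.


Lemma num_P_far (x : mode) r : x.1 != r -> num C x * Pr r = Pr r * num C x.
Proof. by move=> h; apply/eqP; rewrite -subr_eq0 num_P (negbTE h) scale0r. Qed.

Definition kills (X : op) := X *m vac V C = 0.
Lemma killsD X Y : kills X -> kills Y -> kills (X + Y).
Proof. by rewrite /kills mulmxDl => -> ->; rewrite addr0. Qed.
Lemma killsN X : kills X -> kills (- X).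
Proof. by rewrite /kills mulNmx => ->; rewrite oppr0. Qed.
Lemma killsZ a X : kills X -> kills (a *: X).
Proof. by rewrite /kills -scalemxAl => ->; rewrite scaler0. Qed.
Lemma kills0 : kills 0.
Proof. by rewrite /kills mul0mx. Qed.
Lemma kills_mull X Y : kills X -> kills (Y * X).
Proof. by rewrite /kills mulE => ->; rewrite mulmx0. Qed.
Lemma kills_sum (I : Type) (r : seq I) (P : pred I) (F : I -> op) :
  (forall i, P i -> kills (F i)) -> kills (\sum_(i <- r | P i) F i).
Proof. by move=> h; apply: big_ind => //; [exact: kills0 | exact: killsD]. Qed.
Lemma mulmxnl (X : op) n (v : ket) : (X *+ n) *m v = (X *m v) *+ n.
Proof. by elim: n => [|n IH]; rewrite ?mul0mx // !mulrS mulmxDl IH. Qed.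

Variable q : V -> C.
Local Notation eta := (etad q).

Lemma ad_num (x : mode) : comm (num C x) eta = q x.1 *: Pr x.1.
Proof.
rewrite /comm /etad mulr_sumr mulr_suml -sumrB.
rewrite (eq_bigr (fun r => (q r * (x.1 == r)%:R) *: Pr r)); last first.
  by move=> r _; rewrite -scaleAr -scaleAl -scalerBr num_P scalerA.
rewrite (bigD1 x.1) //= eqxx mulr1 big1 ?addr0 // => r nr.
by rewrite eq_sym (negbTE nr) mulr0 scale0r.
Qed.

Lemma commZ a X : comm (a *: X) eta = a *: comm X eta.
Proof. by rewrite /comm -scaleAl -scaleAr scalerBr. Qed.
Lemma commD X Y : comm (X + Y) eta = comm X eta + comm Y eta.
Proof. by rewrite /comm mulrDl mulrDr opprD addrACA. Qed.
Lemma comm0 : comm 0 eta = 0.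
Proof. by rewrite /comm mul0r mulr0 subrr. Qed.
Lemma commMn X n : comm (X *+ n) eta = comm X eta *+ n.
Proof. by rewrite /comm mulrnAl mulrnAr mulrnBl. Qed.
Lemma commM X Y : comm (X * Y) eta = comm X eta * Y + X * comm Y eta.
Proof. by rewrite /comm mulrBl mulrBr !mulrA [RHS]addrC addrA subrK. Qed.

Lemma ad_P r : comm (Pr r) eta = 0.
Proof.
rewrite /comm /etad mulr_sumr mulr_suml -sumrB big1 // => s _.
by rewrite -scaleAr -scaleAl (P_comm r s) subrr.
Qed.

Lemma HseqS X k : Hseq X eta k.+1 = comm (Hseq X eta k) eta.
Proof. by []. Qed.
Lemma HseqD X Y k : Hseq (X + Y) eta k = Hseq X eta k + Hseq Y eta k.
Proof. by elim: k => //= k IH; rewrite IH commD. Qed.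
Lemma HseqZ a X k : Hseq (a *: X) eta k = a *: Hseq X eta k.
Proof. by elim: k => //= k IH; rewrite IH commZ. Qed.
Lemma Hseq0 k : Hseq 0 eta k = 0.
Proof. by elim: k => //= k IH; rewrite IH comm0. Qed.
Lemma Hseq_sum (I : Type) (r : seq I) (P : pred I) (F : I -> op) k :
  Hseq (\sum_(i <- r | P i) F i) eta k = \sum_(i <- r | P i) Hseq (F i) eta k.
Proof. by apply: (big_morph (fun X => Hseq X eta k)); [exact: (fun X Y => HseqD X Y k) | exact: Hseq0]. Qed.
Lemma Hseq_addn X j k : Hseq X eta (j + k) = Hseq (Hseq X eta k) eta j.
Proof. by rewrite /Hseq iterD. Qed.

Lemma Hseq_mul X Y k : comm (comm X eta) eta = 0 ->
  Hseq (X * Y) eta k.+1 = X * Hseq Y eta k.+1 + (comm X eta * Hseq Y eta k) *+ k.+1.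
Proof.
move=> h; elim: k => [|k IH]; first by rewrite /= commM mulr1n addrC.
rewrite HseqS IH commD commMn !commM h mul0r add0r -HseqS.
by rewrite (addrC _ (X * _)) -addrA -mulrS.
Qed.

Definition Fl (s : seq mode) : op := \prod_(x <- s) num C x.
Definition Ql (s : seq mode) : op := \prod_(x <- s) (q x.1 *: Pr x.1).

Lemma num_Q (x : mode) s : x.1 \notin map fst s -> num C x * Ql s = Ql s * num C x.
Proof.
elim: s => [|y s IH] /=; first by rewrite /Ql !big_nil mulr1 mul1r.
rewrite inE negb_or => /andP [nxy ns]; rewrite /Ql !big_cons -/(Ql s).
by rewrite mulrA -scaleAr num_P_far // scaleAl -mulrA IH // mulrA.
Qed.

Lemma list_main s : uniq (map fst s) ->
  [/\ forall k, (size s < k)%N -> Hseq (Fl s) eta k = 0,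
      Hseq (Fl s) eta (size s) = Ql s *+ (size s)`!
    & forall k, (k < size s)%N -> Hseq (Fl s) eta k *m vac V C = 0].
Proof.
elim: s => [_|x s IH] /=.
  split => //; last by rewrite /Fl /Ql !big_nil.
  case=> // k _; rewrite -addn1 Hseq_addn /= /Fl big_nil /comm mul1r mulr1 subrr.
  exact: Hseq0.
case/andP => nx us; case: (IH us) => IH1 IH2 IH3.
have hx : comm (comm (num C x) eta) eta = 0 by rewrite ad_num commZ ad_P scaler0.
have FE : Fl (x :: s) = num C x * Fl s by rewrite /Fl big_cons.
have QE : Ql (x :: s) = (q x.1 *: Pr x.1) * Ql s by rewrite /Ql big_cons.
have help k : (k <= size s)%N -> (num C x * Hseq (Fl s) eta k) *m vac V C = 0.
  rewrite leq_eqVlt => /orP [/eqP ek | lt].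
    by rewrite ek IH2 mulrnAr num_Q // -mulrnAl mulE num_vac mulmx0.
  by rewrite mulE IH3 // mulmx0.
split.
- case=> // k; rewrite ltnS => lt.
  by rewrite FE Hseq_mul // !IH1 ?ltnS ?(ltnW lt) // !mulr0 mul0rn addr0.
- rewrite -HseqS FE Hseq_mul // IH1 ?ltnSn // mulr0 add0r IH2 QE ad_num.
  by rewrite mulrnAr -mulrnA factS mulnC.
case=> [|k] hk; first by rewrite FE; apply: (help 0).
by rewrite FE Hseq_mul // mulmxDl help // mulmxnl mulE IH3 // mulmx0 mul0rn addr0.
Qed.

Definition Gt (S : {set V}) (sg : {ffun {r : V | r \in S} -> bool}) : op :=
  \prod_(r : {r : V | r \in S}) num C (val r, sg r).
Definition Kt (S : {set V}) : op :=
  \prod_(r <- index_enum {r : V | r \in S}) (q (val r) *: Pr (val r)).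

Lemma G_props n (S : {set V}) (sg : {ffun {r : V | r \in S} -> bool}) : #|S| = n ->
  [/\ forall k, (n < k)%N -> Hseq (Gt S sg) eta k = 0,
      Hseq (Gt S sg) eta n = Kt S *+ n`!
    & forall k, (k < n)%N -> Hseq (Gt S sg) eta k *m vac V C = 0].
Proof.
move=> hS.
set s := map (fun r : {r : V | r \in S} => (val r, sg r)) (index_enum {r : V | r \in S}).
have GE : Gt S sg = Fl s by rewrite /Fl big_map.
have KE : Kt S = Ql s by rewrite /Ql big_map.
have sz : size s = n.
  by rewrite size_map size_ie card_sig -hS; apply: eq_card => z; rewrite inE.
have us : uniq (map fst s).
  by rewrite -map_comp (map_inj_uniq val_inj) // index_enum_uniq.
by rewrite GE KE -sz; case: (@list_main s us).
Qed.


Lemma Hseq_I (Scol : {set {set V}})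
  (Vint : forall S : {set V}, {ffun {r : V | r \in S} -> bool} -> C) k :
  Hseq (Iint Scol Vint) eta k = \sum_(S in Scol) \sum_(sg : {ffun {r : V | r \in S} -> bool})
     Vint S sg *: Hseq (Gt S sg) eta k.
Proof.
rewrite /Iint Hseq_sum; apply: eq_bigr => S _; rewrite Hseq_sum.
by apply: eq_bigr => sg _; rewrite HseqZ.
Qed.

End Fock.

Theorem mainTheorem6 (V : finType) (C : numClosedFieldType)
  (E : {set V * V})
  (HEloop : forall r : V, (r, r) \notin E)
  (HEorient : forall r r' : V, (r, r') \in E -> (r', r) \notin E)
  (t : V -> V -> bool -> bool -> C)
  (Ht : forall r r' : V, (r, r') \in E ->
          forall s s' : bool, t r r' s s' = Num.conj (t r' r s' s))
  (mu : V -> bool -> C) (Hmu : forall r s, mu r s \is Num.real)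
  (U : V -> C) (HU : forall r, U r \is Num.real)
  (q : V -> C) (En : C) (HEn : En \is Num.real)
  (Heta : comm (Hgen E t mu U) (etad q) = En *: etad q)
  (M : nat) (HM : (1 <= M)%N)
  (Scol : {set {set V}}) (HS : forall S, S \in Scol -> #|S| = M.+1)
  (Vint : forall S : {set V}, {ffun {r : V | r \in S} -> bool} -> C)
  (HVreal : forall S sg, Vint S sg \is Num.real)
  (HVsum : forall S, S \in Scol -> \sum_(sg : {ffun {r : V | r \in S} -> bool}) Vint S sg = 0) :
  let H := Hgen E t mu U + Iint Scol Vint in
  let eta := etad q in
  [/\ H *m vac V C = 0,
      Hseq H eta 1 *m vac V C = En *: (eta *m vac V C),
      (forall n : nat, (2 <= n <= M)%N -> Hseq H eta n *m vac V C = 0),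
      Hseq H eta M.+1 = 0
    & forall n : nat, H *m (eta ^+ n *m vac V C) = (n%:R * En) *: (eta ^+ n *m vac V C)].
Proof.
move=> H eta.
set Hg := Hgen E t mu U; set I := Iint Scol Vint.
have Hg_vac : Hg *m vac V C = 0.
  apply: killsD; first apply: killsD.
  - apply: killsN; apply: kills_sum => s _; apply: kills_sum => s' _.
    apply: kills_sum => e _.
    by apply: killsD; apply: killsZ; apply: kills_mull; apply: ann_vac.
  - by apply: killsN; apply: kills_sum => r _; apply: kills_sum => s _;
      apply: killsZ; apply: num_vac.
  - by apply: kills_sum => r _; apply: killsZ; apply: kills_mull; apply: num_vac.
have Hg2 k : Hseq Hg eta k.+2 = 0.
  rewrite -addn2 Hseq_addn /= Heta commZ /comm subrr scaler0; exact: Hseq0.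
have Ilow k : (k < M.+1)%N -> Hseq I eta k *m vac V C = 0.
  move=> hk; rewrite Hseq_I mulmx_suml big1 // => S SS.
  rewrite mulmx_suml big1 // => sg _.
  by case: (@G_props _ _ q _ _ sg (HS S SS)) => _ _ G3; rewrite -scalemxAl G3 // scaler0.
have Ihigh k : (M.+1 <= k)%N -> Hseq I eta k = 0.
  move=> hk; rewrite Hseq_I big1 // => S SS.
  move: hk; rewrite leq_eqVlt => /orP [/eqP ek | lt].
    rewrite -ek (eq_bigr (fun sg => Vint S sg *: (Kt _ _ q S *+ M.+1`!))).
      by rewrite -scaler_suml HVsum // scale0r.
    by move=> sg _; case: (@G_props _ _ q _ _ sg (HS S SS)) => _ -> _.
  by rewrite big1 // => sg _; case: (@G_props _ _ q _ _ sg (HS S SS)) => G1 _ _; rewrite G1 // scaler0.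
have HD k : Hseq H eta k = Hseq Hg eta k + Hseq I eta k by apply: HseqD.
have H0 : H *m vac V C = 0.
  by rewrite mulmxDl Hg_vac (Ilow 0 isT : I *m vac V C = 0) addr0.
have H1 : Hseq H eta 1 *m vac V C = En *: (eta *m vac V C).
  by rewrite HD mulmxDl Ilow // addr0 /= Heta -scalemxAl.
have Hmid n : (2 <= n <= M)%N -> Hseq H eta n *m vac V C = 0.
  case: n => [|[|n]] // /andP [_ hn].
  by rewrite HD Hg2 add0r Ilow // ltnS (leq_trans hn).
have Htop : Hseq H eta M.+1 = 0.
  by case: M HM HS Ilow Ihigh Hmid => // m _ _ _ Ih _; rewrite HD Hg2 add0r Ih.
have Hhigh k : (2 <= k)%N -> Hseq H eta k *m vac V C = 0.
  move=> hk; case: (leqP k M) => hkM; first by apply: Hmid; rewrite hk.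
  case: k hk hkM => [|[|k]] // _ hkM.
  by rewrite HD Hg2 Ihigh // add0r mul0mx.
have Hcomm X : X * eta = eta * X + comm X eta by rewrite /comm addrC subrK.
have Hk_eta : forall n k, (2 <= k)%N -> Hseq H eta k *m (eta ^+ n *m vac V C) = 0.
  elim=> [|n IH] k hk; first by rewrite expr0 mul1mx Hhigh.
  rewrite exprS mulE mulmxA mulmxE Hcomm -HseqS mulmxDl !mulE IH // mulmx0 add0r.
  by rewrite IH // ltnW.
have H1_eta n : Hseq H eta 1 *m (eta ^+ n *m vac V C) = En *: (eta ^+ n.+1 *m vac V C).
  elim: n => [|n IH]; first by rewrite expr0 mul1mx H1 expr1.
  rewrite exprS mulE mulmxA mulmxE Hcomm -HseqS mulmxDl !mulE IH Hk_eta // addr0.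
  by rewrite -scalemxAr.
split => // n.
elim: n => [|n IH]; first by rewrite expr0 mul1mx H0 mul0r scale0r.
rewrite exprS mulE mulmxA mulmxE Hcomm mulmxDl !mulE IH.
rewrite (_ : comm H eta = Hseq H eta 1) // H1_eta -scalemxAr exprS mulE.
by rewrite -scalerDl mulrSr mulrDl mul1r.
Qed.
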